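(* For every $j$ with $2\le j\le n-1$ the following identities of operators on $V^{\otimes n}$ hold: $$S_jS_{j-1}T_j=T_{j-1}S_jS_{j-1},$$ $$S_jS_{j-1}S_jS_{j-1}^{-1}T_{j-1}=T_jS_jS_{j-1}S_jS_{j-1}^{-1},$$ $$S_jS_{j-1}S_jS_{j-1}T_{j-1}=T_jS_jS_{j-1}S_jS_{j-1},$$ where $S_{j-1}^{-1}$ denotes the inverse of the (invertible) operator $S_{j-1}$.
   Context: Let $n\ge 3$, $m\ge1$ and $\mathbb K=\mathbb C(q,Q_1,\dots,Q_m)$, the field of rational functions in indeterminates. Fix nonnegative integers $k_1,\dots,k_m,\ell_1,\dots,\ell_m$ with $N=\sum_{c=1}^m(k_c+\ell_c)>0$. Let $V$ be a $\mathbb K$-superspace with homogeneous basis $\{v^{(c)}_a:1\le c\le m,\ 1\le a\le k_c+\ell_c\}$, where $v^{(c)}_a$ is even if $a\le k_c$ and odd if $a>k_c$; $v^{(c)}_a$ has colour $c$. Totally order this basis by $v^{(c)}_a<v^{(c')}_b$ iff $c<c'$, or $c=c'$ and $a<b$, and write it as $u_1<\cdots<u_N$; let $\bar j\in\{0,1\}$ be the parity of $u_j$ and $\mathrm{col}(j)$ its colour. For $\mathbf i=(i_1,\dots,i_n)\in\{1,\dots,N\}^n$ write also $\mathbf i$ for the basis vector $u_{i_1}\otimes\cdots\otimes u_{i_n}$ of $V^{\otimes n}$, put $c_t(\mathbf i)=\mathrm{col}(i_t)$, and let $\mathbf i s_a$ be $\mathbf i$ with entries $a,a+1$ interchanged.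 Linear operators on $V^{\otimes n}$ ($1\le a\le n-1$): $s_a(\mathbf i)=(-1)^{\bar i_a}\mathbf i$ if $i_a=i_{a+1}$, $s_a(\mathbf i)=(-1)^{\bar i_a\bar i_{a+1}}\mathbf i s_a$ otherwise; $T_a(\mathbf i)=(q-q^{-1})\mathbf i+(-1)^{\bar i_a\bar i_{a+1}}\mathbf i s_a$ if $i_a<i_{a+1}$; $T_a(\mathbf i)=\frac{(q-q^{-1})+(-1)^{\bar i_a}(q+q^{-1})}{2}\mathbf i$ if $i_a=i_{a+1}$; $T_a(\mathbf i)=(-1)^{\bar i_a\bar i_{a+1}}\mathbf i s_a$ if $i_a>i_{a+1}$; $S_a(\mathbf i)=T_a(\mathbf i)$ if $c_a(\mathbf i)=c_{a+1}(\mathbf i)$, and $S_a(\mathbf i)=s_a(\mathbf i)$ otherwise. Products of operators denote composition. *)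

(* Defs.v *)
From HB Require Import structures.
From mathcomp Require Import all_boot all_order all_algebra.
From mathcomp Require Import complex.
From mathcomp Require Import Rstruct.
From mathcomp Require Import mpoly.
Set Implicit Arguments. Unset Strict Implicit. Unset Printing Implicit Defensive.
Import GRing.Theory.
Local Open Scope ring_scope.

Definition Cplx : numClosedFieldType := Rdefinitions.R[i].

(* K = C(q, Q_1, ..., Q_m): fraction field of C[X_0, ..., X_m],
   q = X_0, Q_c = X_c. *)
Definition Kfield (m : nat) : fieldType := {fraction {mpoly Cplx[m.+1]}}.
Definition qpar (m : nat) : Kfield m := tofrac ('X_ord0).

Section Ops.
Variables (m : nat) (k l : 'I_m -> nat) (n : nat).

(* The ordered basis u_1 < ... < u_N of V, listed as (colour, parity) pairs:
   colour c (0-based), parity true (odd) iff a > k_c (1-based a). *)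
Definition basis_seq : seq (nat * bool) :=
  flatten [seq [seq (val c, k c <= a)%N | a <- iota 0 (k c + l c)] | c <- enum 'I_m].
Definition Ndim : nat := (\sum_(c < m) (k c + l c))%N.
Definition col (j : nat) : nat := (nth (0%N, false) basis_seq j).1.
Definition par (j : nat) : bool := (nth (0%N, false) basis_seq j).2.

Local Notation K := (Kfield m).
Local Notation q := (qpar m).

(* basis tensors u_{i_1} (x) ... (x) u_{i_n}, indices 0-based in 'I_Ndim *)
Definition tens := {ffun 'I_n -> 'I_Ndim}.
Definition vec := tens -> K.
Definition op := vec -> vec.

Definition ent (t : tens) (p : nat) : nat := nth 0%N [seq val (t x) | x <- enum 'I_n] p.
(* exchange of (1-based) positions a and a+1, i.e. 0-based a-1 and a *)
Definition swp (a : nat) (p : 'I_n) : 'I_n :=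
  if val p == a.-1 then insubd p a else if val p == a then insubd p a.-1 else p.
Definition tswap (a : nat) (t : tens) : tens := [ffun p => t (swp a p)].

Definition bvec (t : tens) : vec := fun y => (y == t)%:R.
Definition sgn (b : bool) : K := (-1) ^+ b.
Definition ext (f : tens -> vec) : op := fun v y => \sum_x v x * f x y.

Definition s_b (a : nat) (t : tens) : vec :=
  let x := ent t a.-1 in let y := ent t a in
  if x == y then fun z => sgn (par x) * bvec t z
  else fun z => sgn (par x && par y) * bvec (tswap a t) z.

Definition T_b (a : nat) (t : tens) : vec :=
  let x := ent t a.-1 in let y := ent t a in
  if (x < y)%N then fun z => (q - q^-1) * bvec t z + sgn (par x && par y) * bvec (tswap a t) z
  else if x == y then fun z => ((q - q^-1) + sgn (par x) * (q + q^-1)) / 2%:R * bvec t z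
  else fun z => sgn (par x && par y) * bvec (tswap a t) z.

Definition S_b (a : nat) (t : tens) : vec :=
  if col (ent t a.-1) == col (ent t a) then T_b a t else s_b a t.

Definition sop (a : nat) : op := ext (s_b a).
Definition Top (a : nat) : op := ext (T_b a).
Definition Sop (a : nat) : op := ext (S_b a).
End Ops.

(* Main.v *)
Require Import Defs.
From HB Require Import structures.
From mathcomp Require Import all_boot all_order all_algebra.
From mathcomp Require Import ring lra zify.
From mathcomp Require Import mpoly.
From Stdlib Require Import FunctionalExtensionality.
Set Implicit Arguments. Unset Strict Implicit. Unset Printing Implicit Defensive.
Import GRing.Theory.
Local Open Scope ring_scope.

Definition LP := (nat * seq int)%type.
Fixpoint padd (a b : seq int) : seq int :=
  match a, b with [::], _ => b | _, [::] => a | x :: a', y :: b' => (x + y) :: padd a' b' end.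
Definition pscale (c : int) (a : seq int) := map (fun x => c * x) a.
Fixpoint pmul (a b : seq int) : seq int :=
  match a with [::] => [::] | x :: a' => padd (pscale x b) (0 :: pmul a' b) end.
Definition pshift (k : nat) (a : seq int) := nseq k 0 ++ a.
Definition lpadd (x y : LP) : LP := ((x.1 + y.1)%N, padd (pshift y.1 x.2) (pshift x.1 y.2)).
Definition lpmul (x y : LP) : LP := ((x.1 + y.1)%N, pmul x.2 y.2).
Definition lpneg (x : LP) : LP := (x.1, map (fun c => - c) x.2).
Definition lp0 : LP := (0%N, [::]).
Definition lpone : LP := (0%N, [:: 1]).
Definition lpeps : LP := (1%N, [:: -1; 0; 1]).
Definition lpsgn (b : bool) : LP := (0%N, [:: if b then -1 else 1]).
Definition lpeig (b : bool) : LP := if b then (1%N, [:: -1]) else (0%N, [:: 0; 1]).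
Definition lpeq (x y : LP) : bool := all (fun c => c == 0) (lpadd x (lpneg y)).2.

Inductive cmp := Lt | Eq | Gt.
Record data := Data { c01 : cmp; c02 : cmp; c12 : cmp; e01 : bool; e02 : bool; e12 : bool;
  p0 : bool; p1 : bool; p2 : bool }.
Definition flipc c := match c with Lt => Gt | Eq => Eq | Gt => Lt end.
Definition cmpD D (a b : nat) := match a with
  | 0 => match b with 0 => Eq | 1 => c01 D | _ => c02 D end
  | 1 => match b with 0 => flipc (c01 D) | 1 => Eq | _ => c12 D end
  | _ => match b with 0 => flipc (c02 D) | 1 => flipc (c12 D) | _ => Eq end end.
Definition ltD D a b := if cmpD D a b is Lt then true else false.
Definition eqvD D a b := if cmpD D a b is Eq then true else false.
Definition ceD D (a b : nat) := match a with
  | 0 => match b with 0 => true | 1 => e01 D | _ => e02 D end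
  | 1 => match b with 0 => e01 D | 1 => true | _ => e12 D end
  | _ => match b with 0 => e02 D | 1 => e12 D | _ => true end end.
Definition pD D (a : nat) := match a with 0 => p0 D | 1 => p1 D | _ => p2 D end.

Definition word := (nat * nat * nat)%type.
Definition fstAt (s : nat) (w : word) := if s is 0 then w.1.1 else w.1.2.
Definition sndAt (s : nat) (w : word) := if s is 0 then w.1.2 else w.2.
Definition swapw (s : nat) (w : word) : word :=
  if s is 0 then (w.1.2, w.1.1, w.2) else (w.1.1, w.2, w.1.2).

Definition Tloc D s (w : word) : seq (LP * word) :=
  let a := fstAt s w in let b := sndAt s w in
  if ltD D a b then [:: (lpeps, w); (lpsgn (pD D a && pD D b), swapw s w)]
  else if eqvD D a b then [:: (lpeig (pD D a), w)]
  else [:: (lpsgn (pD D a && pD D b), swapw s w)].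
Definition sloc D s (w : word) : seq (LP * word) :=
  let a := fstAt s w in let b := sndAt s w in
  if eqvD D a b then [:: (lpsgn (pD D a), w)]
  else [:: (lpsgn (pD D a && pD D b), swapw s w)].
Definition Sloc D s w := if ceD D (fstAt s w) (sndAt s w) then Tloc D s w else sloc D s w.
Definition Siloc D s w := if ceD D (fstAt s w) (sndAt s w)
  then (lpneg lpeps, w) :: Tloc D s w else sloc D s w.

Definition bindL (g : word -> seq (LP * word)) (l : seq (LP * word)) :=
  flatten [seq [seq (lpmul cw.1 cw'.1, cw'.2) | cw' <- g cw.2] | cw <- l].
Fixpoint run (gs : seq (word -> seq (LP * word))) (w : word) :=
  if gs is g :: gs' then bindL g (run gs' w) else [:: (lpone, w)].

Definition canon D a : nat := if eqvD D 0 a then 0 else if eqvD D 1 a then 1 else 2.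
Definition canonw D (w : word) : word := (canon D w.1.1, canon D w.1.2, canon D w.2).
Definition l3 := [:: 0; 1; 2]%N.
Definition allwords : seq word := flatten [seq [seq (a, b, c) | b <- l3, c <- l3] | a <- l3].
Definition coef D (l : seq (LP * word)) (w' : word) : LP :=
  foldr (fun cw acc => if canonw D cw.2 == w' then lpadd cw.1 acc else acc) lp0 l.
Definition checkEq D l1 l2 := all (fun w' => lpeq (coef D l1 w') (coef D l2 w')) allwords.

Definition w0 : word := (0, 1, 2)%N.
Definition checkAll D :=
  let S1 := Sloc D 1 in let S0 := Sloc D 0 in let T1 := Tloc D 1 in let T0 := Tloc D 0 in
  let Si0 := Siloc D 0 in
  [&& checkEq D (run [:: S1; S0; T1] w0) (run [:: T0; S1; S0] w0),
      checkEq D (run [:: S1; S0; S1; Si0; T0] w0) (run [:: T1; S1; S0; S1; Si0] w0),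
      checkEq D (run [:: S1; S0; S1; S0; T0] w0) (run [:: T1; S1; S0; S1; S0] w0),
      checkEq D (run [:: S0; Si0] w0) [:: (lpone, w0)] &
      checkEq D (run [:: Si0; S0] w0) [:: (lpone, w0)]].

Definition conds D (a b c : nat) :=
  [&& (ltD D a b && ltD D b c) ==> ltD D a c, (ltD D a b && eqvD D b c) ==> ltD D a c,
      (eqvD D a b && ltD D b c) ==> ltD D a c, (eqvD D a b && eqvD D b c) ==> eqvD D a c,
      eqvD D a b ==> ceD D a b, eqvD D a b ==> (pD D a == pD D b),
      (ceD D a b && ceD D b c) ==> ceD D a c &
      (ltD D a b && ltD D b c && ceD D a c) ==> ceD D a b].
Definition valid D := all (fun a => all (fun b => all (fun c => conds D a b c) l3) l3) l3.

Definition allC (f : cmp -> bool) := [&& f Lt, f Eq & f Gt].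
Definition allB (f : bool -> bool) := f true && f false.
Definition chk D := if valid D then checkAll D else true.
Definition bigcheck :=
  allC (fun a => allC (fun b => allC (fun c => allB (fun d => allB (fun e => allB (fun f =>
  allB (fun g => allB (fun h => allB (fun i =>
    chk (Data a b c d e f g h i)))))))))).


Lemma bigcheckP : bigcheck = true.
Proof. vm_compute. reflexivity. Qed.

Lemma allCP f : allC f -> forall c, f c.
Proof. by case/and3P => ? ? ? []. Qed.
Lemma allBP f : allB f -> forall c, f c.
Proof. by case/andP => ? ? []. Qed.

Lemma checkAllP D : valid D -> checkAll D.
Proof.
case: D => a b c d e f g h i hv.
move: bigcheckP; rewrite /bigcheck.
move=> /allCP/(_ a) /allCP/(_ b) /allCP/(_ c) /allBP/(_ d) /allBP/(_ e)
  /allBP/(_ f) /allBP/(_ g) /allBP/(_ h) /allBP/(_ i).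
cbv beta; by rewrite /chk hv.
Qed.

Section Interp.
Variables (F : fieldType) (q : F).
Hypothesis qnz : q != 0.
Fixpoint peval (a : seq int) : F := if a is x :: a' then x%:~R + q * peval a' else 0.
Lemma peval_padd a b : peval (padd a b) = peval a + peval b.
Proof.
elim: a b => [|x a IH] [|y b] /=; rewrite ?add0r ?addr0 //.
by rewrite IH intrD; ring.
Qed.
Lemma peval_pscale c a : peval (pscale c a) = c%:~R * peval a.
Proof. by elim: a => [|x a IH] /=; rewrite ?mulr0 // IH intrM; ring. Qed.
Lemma peval_pmul a b : peval (pmul a b) = peval a * peval b.
Proof.
elim: a => [|x a IH] /=; first by rewrite mul0r.
by rewrite peval_padd peval_pscale /= IH; ring.
Qed.
Lemma peval_pshift k a : peval (pshift k a) = q ^+ k * peval a.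
Proof. by elim: k => [|k IH] /=; rewrite ?mul1r // IH exprS; ring. Qed.
Lemma peval_neg a : peval (map (fun c => - c) a) = - peval a.
Proof. by elim: a => [|x a IH] /=; rewrite ?oppr0 // IH intrN; ring. Qed.
Lemma peval_zero a : all (fun c => c == 0) a -> peval a = 0.
Proof. by elim: a => [|x a IH] //= /andP[/eqP-> /IH->]; rewrite mulr0 addr0. Qed.

Definition interp (x : LP) : F := q^-1 ^+ x.1 * peval x.2.
Lemma qVK k : q^-1 ^+ k * q ^+ k = 1.
Proof. by rewrite -exprMn mulVf // expr1n. Qed.
Lemma interp_add x y : interp (lpadd x y) = interp x + interp y.
Proof.
case: x y => [o1 a] [o2 b]; rewrite /interp /= peval_padd !peval_pshift exprD.
have h1 := qVK o1; have h2 := qVK o2.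
transitivity (q^-1 ^+ o1 * (q^-1 ^+ o2 * q ^+ o2) * peval a +
              q^-1 ^+ o2 * (q^-1 ^+ o1 * q ^+ o1) * peval b); first by ring.
by rewrite h1 h2; ring.
Qed.
Lemma interp_mul x y : interp (lpmul x y) = interp x * interp y.
Proof. case: x y => [o1 a] [o2 b]; rewrite /interp /= peval_pmul exprD; ring. Qed.
Lemma interp_neg x : interp (lpneg x) = - interp x.
Proof. case: x => o a; rewrite /interp /= peval_neg; ring. Qed.
Lemma lpeqP x y : lpeq x y -> interp x = interp y.
Proof.
move=> /peval_zero h; apply/eqP; rewrite -subr_eq0 -interp_neg -interp_add.
by rewrite /interp h mulr0.
Qed.
Lemma interp0 : interp lp0 = 0.
Proof. by rewrite /interp /= mulr0. Qed.
Lemma interp1 : interp lpone = 1.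
Proof. by rewrite /interp /= mulr0 addr0 mul1r. Qed.
Lemma interp_eps : interp lpeps = q - q^-1.
Proof.
rewrite /interp /= expr1 !mulr0 !addr0.
rewrite !mulrDr !mulrA mulVf //; ring.
Qed.
Lemma interp_sgn b : interp (lpsgn b) = (-1) ^+ b.
Proof. by case: b; rewrite /interp /= mulr0 addr0 mul1r. Qed.
Hypothesis two : (2%:R : F) != 0.
Lemma interp_eig b : interp (lpeig b) = ((q - q^-1) + (-1) ^+ b * (q + q^-1)) / 2%:R.
Proof.
apply: (mulIf two); rewrite divfK //.
case: b; rewrite /interp /= ?mulr0 ?addr0 ?expr1 ?mul1r ?expr0; ring.
Qed.
End Interp.



Lemma qnz m : qpar m != 0.
Proof.
rewrite /qpar tofrac_eq0; apply/eqP => h.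
have := congr1 (meval (fun _ : 'I_m.+1 => (1 : Cplx))) h.
by rewrite mevalXU meval0 => /eqP; rewrite oner_eq0.
Qed.

Lemma two_nz m : (2%:R : Kfield m) != 0.
Proof.
have -> : (2%:R : Kfield m) = tofrac (2%:R : {mpoly Cplx[m.+1]}) by rewrite rmorph_nat.
rewrite tofrac_eq0; apply/eqP => h.
have := congr1 (meval (fun _ : 'I_m.+1 => (1 : Cplx))) h.
rewrite -(rmorph_nat (@mpolyC m.+1 Cplx)) mevalC meval0 => /eqP.
by rewrite Num.Theory.pnatr_eq0.
Qed.

Definition cmpn (x y : nat) := if (x < y)%N then Lt else if x == y then Eq else Gt.
Lemma cmpn_sym x y : cmpn y x = flipc (cmpn x y).
Proof. by rewrite /cmpn; case: ltngtP. Qed.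
Lemma cmpn_refl x : cmpn x x = Eq.
Proof. by rewrite /cmpn ltnn eqxx. Qed.
Lemma ltc_cmpn x y : (if cmpn x y is Lt then true else false) = (x < y)%N.
Proof. by rewrite /cmpn; case: ltngtP. Qed.
Lemma eqc_cmpn x y : (if cmpn x y is Eq then true else false) = (x == y).
Proof. by rewrite /cmpn; case: ltngtP. Qed.

Lemma conds_nat (cl : nat -> nat) (pr : nat -> bool) N
  (mono : forall i j, (i < j)%N -> (j < N)%N -> (cl i <= cl j)%N) x y z :
  (x < N)%N -> (y < N)%N -> (z < N)%N ->
  [&& ((x < y) && (y < z))%N ==> (x < z)%N, ((x < y)%N && (y == z)) ==> (x < z)%N,
      ((x == y) && (y < z)%N) ==> (x < z)%N, ((x == y) && (y == z)) ==> (x == z),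
      (x == y) ==> (cl x == cl y), (x == y) ==> (pr x == pr y),
      ((cl x == cl y) && (cl y == cl z)) ==> (cl x == cl z) &
      ((x < y)%N && (y < z)%N && (cl x == cl z)) ==> (cl x == cl y)].
Proof.
move=> hx hy hz.
have h1 := mono x y; have h2 := mono y z.
repeat (apply/andP; split); try lia; by apply/implyP => /eqP->.
Qed.

Section Ops2.
Variables (m : nat) (k l : 'I_m -> nat) (n : nat).
Local Notation tens := (tens k l n).
Local Notation vec := (Defs.vec k l n).
Local Notation K := (Kfield m).
Local Notation q := (qpar m).

Lemma ext_bvec (f : tens -> vec) t u : ext f (bvec t) u = f t u.
Proof.
rewrite /ext (bigD1 t) //= /bvec eqxx mul1r big1 ?addr0 // => x /negbTE ->.
by rewrite mul0r.
Qed.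

Lemma ext_id (v : vec) u : ext (fun t => bvec t) v u = v u.
Proof.
rewrite /ext (bigD1 u) //= /bvec eqxx mulr1 big1 ?addr0 // => x hx.
by rewrite eq_sym (negbTE hx) mulr0.
Qed.

Lemma ext_congr (f : tens -> vec) (X Y : vec) u :
  (forall x, X x = Y x) -> ext f X u = ext f Y u.
Proof. by move=> h; apply: eq_bigr => x _; rewrite h. Qed.

Lemma ext_comp (f g : tens -> vec) (v : vec) u :
  ext f (ext g v) u = ext (fun t => ext f (g t)) v u.
Proof.
rewrite /ext; under eq_bigr do rewrite mulr_suml.
rewrite exchange_big; apply: eq_bigr => x _; rewrite mulr_sumr.
by apply: eq_bigr => y _; rewrite mulrA.
Qed.

Definition chain (fs : seq (tens -> vec)) (v : vec) : vec := foldr (fun f acc => ext f acc) v fs.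

Lemma chain_ext fs v u : chain fs v u = ext (fun t => chain fs (bvec t)) v u.
Proof.
elim: fs u => [|f fs IH] u /=; first by rewrite ext_id.
by rewrite (ext_congr _ _ IH) ext_comp.
Qed.

Lemma chain_eq fs gs :
  (forall t u, chain fs (bvec t) u = chain gs (bvec t) u) -> forall v, chain fs v = chain gs v.
Proof.
move=> h v; apply: functional_extensionality => u.
by rewrite !chain_ext; apply: eq_bigr => x _; rewrite h.
Qed.

Definition Sinv_b (a : nat) (t : tens) : vec :=
  if Defs.col k l (ent t a.-1) == Defs.col k l (ent t a)
  then (fun z => T_b a t z - (q - q^-1) * bvec t z) else s_b a t.

Lemma sum_pick (s : seq word) (x : word) (F : word -> K) :
  uniq s -> x \in s -> \sum_(y <- s) (x == y)%:R * F y = F x.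
Proof.
elim: s => [|y s IH] //= /andP[ys us]; rewrite inE big_cons => /orP[/eqP->|xs].
  rewrite eqxx mul1r big1_seq ?addr0 // => z /andP[_ zs].
  have -> : (y == z) = false by apply/negbTE; apply: contraNneq ys => ->.
  by rewrite mul0r.
have -> : (x == y) = false by apply/negbTE; apply: contraNneq ys => <-.
by rewrite mul0r add0r IH.
Qed.

Lemma ent_ord (t' : tens) (p : 'I_n) : ent t' p = val (t' p).
Proof. by rewrite /ent (nth_map p) ?size_enum_ord ?ltn_ord // nth_ord_enum. Qed.

Lemma size_basis : size (basis_seq k l) = Ndim k l.
Proof.
rewrite /basis_seq size_flatten /shape -map_comp sumnE big_map /Ndim.
rewrite -[RHS]big_enum /=. apply: eq_bigr => c _; by rewrite /= size_map size_iota.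
Qed.
Lemma path_nseq (x0 c : nat) r : (x0 <= c)%N -> path leq x0 (nseq r c).
Proof. elim: r x0 => [|r IH] x0 //= ->; exact: IH. Qed.
Lemma path_le (x y : nat) s : (x <= y)%N -> path leq y s -> path leq x s.
Proof. case: s => //= z s xy /andP[yz ->]; by rewrite (leq_trans xy yz). Qed.
Lemma path_flat (f : 'I_m -> nat) (s : seq 'I_m) (x0 : nat) :
  path leq x0 (map val s) -> path leq x0 (flatten [seq nseq (f c) (val c) | c <- s]).
Proof.
elim: s x0 => [|c s IH] x0 //= /andP[h0 hs].
rewrite cat_path path_nseq //; apply: IH.
case: (f c) => [|r] /=; first exact: path_le hs.
by have -> : last (val c) (nseq r (val c)) = val c by elim: r.
Qed.
Lemma sorted_basis : sorted leq (map fst (basis_seq k l)).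
Proof.
have -> : map fst (basis_seq k l) = flatten [seq nseq (k c + l c) (val c) | c <- enum 'I_m].
  rewrite /basis_seq map_flatten -map_comp; congr flatten; apply: eq_map => c /=.
  have H (s : seq nat) (x : nat) : [seq x | _ <- s] = nseq (size s) x by elim: s => //= _ s ->.
  by rewrite -map_comp -[X in _ = nseq X _](size_iota 0 (k c + l c)); apply: H.
apply: (@path_sorted _ _ 0); apply: path_flat.
rewrite val_enum_ord path_sortedE; last exact: leq_trans.
rewrite (sub_sorted _ (iota_ltn_sorted 0 m)) ?andbT; last by move=> x y /ltnW.
by apply/allP.
Qed.
Lemma colmono i j : (i < j)%N -> (j < Ndim k l)%N -> (Defs.col k l i <= Defs.col k l j)%N.
Proof.
move=> /ltnW ij jN; have iN : (i < Ndim k l)%N by apply: leq_ltn_trans jN.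
rewrite /Defs.col -!(nth_map (0, false) 0 fst) ?size_basis //.
apply: (sorted_leq_nth leq_trans leqnn 0 sorted_basis) => //; by rewrite inE size_map size_basis.
Qed.

Section Local.
Variables (j : nat) (p0 p1 p2 : 'I_n).
Hypotheses (hp0 : val p0 = j.-1.-1) (hp1 : val p1 = j.-1) (hp2 : val p2 = j) (hj : (1 < j)%N).
Variable (t : tens).

Lemma p01 : (p0 == p1) = false.
Proof. apply/negbTE/eqP => /(congr1 val); rewrite hp0 hp1; lia. Qed.
Lemma p02 : (p0 == p2) = false.
Proof. apply/negbTE/eqP => /(congr1 val); rewrite hp0 hp2; lia. Qed.
Lemma p12 : (p1 == p2) = false.
Proof. apply/negbTE/eqP => /(congr1 val); rewrite hp1 hp2; lia. Qed.

Definition vv (a : nat) : 'I_(Ndim k l) := match a with 0 => t p0 | 1 => t p1 | _ => t p2 end.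
Definition rr (a : nat) : nat := val (vv a).
Definition setw (w : word) : tens :=
  [ffun p => if p == p0 then vv w.1.1 else if p == p1 then vv w.1.2
             else if p == p2 then vv w.2 else t p].
Lemma setwE w p : setw w p = if p == p0 then vv w.1.1 else if p == p1 then vv w.1.2
             else if p == p2 then vv w.2 else t p.
Proof. by rewrite ffunE. Qed.
Lemma setw_p0 w : setw w p0 = vv w.1.1.
Proof. by rewrite setwE eqxx. Qed.
Lemma setw_p1 w : setw w p1 = vv w.1.2.
Proof. by rewrite setwE eq_sym p01 eqxx. Qed.
Lemma setw_p2 w : setw w p2 = vv w.2.
Proof. by rewrite setwE eq_sym p02 eq_sym p12 eqxx. Qed.

Lemma setw_w0 : setw w0 = t.
Proof.
apply/ffunP => p; rewrite setwE.
have [e|h0] := eqVneq p p0; first by rewrite e.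
have [e|h1] := eqVneq p p1; first by rewrite e.
by have [e|h2] := eqVneq p p2; first by rewrite e.
Qed.

Lemma entw0 w : ent (setw w) j.-1.-1 = rr w.1.1.
Proof. by rewrite -hp0 ent_ord setw_p0. Qed.
Lemma entw1 w : ent (setw w) j.-1 = rr w.1.2.
Proof. by rewrite -hp1 ent_ord setw_p1. Qed.
Lemma entw2 w : ent (setw w) j = rr w.2.
Proof. by rewrite -hp2 ent_ord setw_p2. Qed.

Lemma swp0 p : swp j.-1 p = if p == p0 then p1 else if p == p1 then p0 else p.
Proof. by rewrite /swp -hp0 -hp1 !valKd !val_eqE. Qed.
Lemma swp1 p : swp j p = if p == p1 then p2 else if p == p2 then p1 else p.
Proof. by rewrite /swp -hp1 -hp2 !valKd !val_eqE. Qed.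

Lemma tswap0 w : tswap j.-1 (setw w) = setw (swapw 0 w).
Proof.
apply/ffunP => p; rewrite ffunE swp0 [RHS]setwE.
have [e|h0] := eqVneq p p0; first by rewrite ?e /= setw_p1.
have [e|h1] := eqVneq p p1; first by rewrite ?e /= setw_p0.
by rewrite setwE (negbTE h0) (negbTE h1).
Qed.
Lemma tswap1 w : tswap j (setw w) = setw (swapw 1 w).
Proof.
apply/ffunP => p; rewrite ffunE swp1 [RHS]setwE.
have [e|h0] := eqVneq p p0; first by rewrite ?e /= p01 p02 setw_p0.
have [e|h1] := eqVneq p p1; first by rewrite ?e /= setw_p2.
have [e|h2] := eqVneq p p2; first by rewrite ?e /= setw_p1.
by rewrite setwE (negbTE h0) (negbTE h1) (negbTE h2).
Qed.

Definition Dt := Data (cmpn (rr 0) (rr 1)) (cmpn (rr 0) (rr 2)) (cmpn (rr 1) (rr 2))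
  (Defs.col k l (rr 0) == Defs.col k l (rr 1)) (Defs.col k l (rr 0) == Defs.col k l (rr 2))
  (Defs.col k l (rr 1) == Defs.col k l (rr 2))
  (par k l (rr 0)) (par k l (rr 1)) (par k l (rr 2)).

Lemma cmpD_real a b : cmpD Dt a b = cmpn (rr a) (rr b).
Proof.
by case: a => [|[|a]]; case: b => [|[|b]]; rewrite /cmpD /= ?cmpn_refl // -cmpn_sym.
Qed.
Lemma ltD_real a b : ltD Dt a b = (rr a < rr b)%N.
Proof. by rewrite /ltD cmpD_real ltc_cmpn. Qed.
Lemma eqvD_real a b : eqvD Dt a b = (rr a == rr b).
Proof. by rewrite /eqvD cmpD_real eqc_cmpn. Qed.
Lemma ceD_real a b : ceD Dt a b = (Defs.col k l (rr a) == Defs.col k l (rr b)).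
Proof. by case: a => [|[|a]]; case: b => [|[|b]]; rewrite /ceD /= ?eqxx // eq_sym. Qed.
Lemma pD_real a : pD Dt a = par k l (rr a).
Proof. by case: a => [|[|a]]. Qed.

Lemma vv_canon a : vv (canon Dt a) = vv a.
Proof.
rewrite /canon !eqvD_real /rr.
case: a => [|[|a]] /=; rewrite ?eqxx //.
  by case: eqP => // h; apply: val_inj.
by case: eqP => [h|_]; [apply: val_inj | case: eqP => // h; apply: val_inj].
Qed.
Lemma setw_canon w : setw (canonw Dt w) = setw w.
Proof. by apply/ffunP => p; rewrite !setwE /= !vv_canon. Qed.

Definition evalL (l0 : seq (LP * word)) : vec :=
  fun u => \sum_(cw <- l0) interp q cw.1 * bvec (setw cw.2) u.

Definition realizes (f : tens -> vec) (g : word -> seq (LP * word)) :=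
  forall w u, f (setw w) u = evalL (g w) u.

Lemma ext_evalL f g l0 u : realizes f g -> ext f (evalL l0) u = evalL (bindL g l0) u.
Proof.
move=> hf.
transitivity (\sum_(cw <- l0) interp q cw.1 * ext f (bvec (setw cw.2)) u).
  rewrite /ext /evalL; under eq_bigr do rewrite mulr_suml.
  rewrite exchange_big; apply: eq_bigr => cw _; rewrite mulr_sumr.
  by apply: eq_bigr => x _; rewrite mulrA.
rewrite /evalL /bindL big_flatten big_map; apply: eq_bigr => cw _.
rewrite ext_bvec hf /evalL big_map mulr_sumr; apply: eq_bigr => cw' _.
by rewrite interp_mul ?qnz // mulrA.
Qed.

Fixpoint allR (ps : seq ((tens -> vec) * (word -> seq (LP * word)))) : Prop :=
  if ps is p :: ps' then realizes p.1 p.2 /\ allR ps' else True.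

Lemma chain_real ps : allR ps ->
  forall w u, chain (map fst ps) (bvec (setw w)) u = evalL (run (map snd ps) w) u.
Proof.
elim: ps => [|[f g] ps IH] /= => [_ w u|[hf hps] w u].
  by rewrite /evalL big_cons big_nil interp1 mul1r addr0.
by rewrite (ext_congr _ _ (IH hps w)); apply: ext_evalL.
Qed.

Lemma canon_l3 a : canon Dt a \in l3.
Proof. by rewrite /canon; case: ifP => _; [|case: ifP]. Qed.
Lemma canonw_all w : canonw Dt w \in allwords.
Proof.
rewrite /canonw; move: (canon_l3 w.1.1) (canon_l3 w.1.2) (canon_l3 w.2).
by rewrite !inE => /or3P[]/eqP-> /or3P[]/eqP-> /or3P[]/eqP->.
Qed.

Lemma evalL_coef l0 u :
  evalL l0 u = \sum_(w' <- allwords) interp q (coef Dt l0 w') * bvec (setw w') u.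
Proof.
elim: l0 => [|[c w] l0 IH].
  by rewrite /evalL big_nil big1 // => w' _; rewrite interp0 mul0r.
have -> : evalL ((c, w) :: l0) u = interp q c * bvec (setw w) u + evalL l0 u.
  by rewrite /evalL big_cons.
rewrite IH.
transitivity (\sum_(w' <- allwords) ((canonw Dt w == w')%:R * (interp q c * bvec (setw w') u)
   + interp q (coef Dt l0 w') * bvec (setw w') u)).
  rewrite big_split /= sum_pick ?canonw_all // setw_canon //.
apply: eq_bigr => w' _; rewrite [coef _ (_ :: _) _]/coef /= -/(coef Dt l0 w').
case: eqP => _; rewrite ?interp_add ?qnz //=; ring.
Qed.

Lemma chain_local ps1 ps2 : allR ps1 -> allR ps2 ->
  checkEq Dt (run (map snd ps1) w0) (run (map snd ps2) w0) ->
  forall u, chain (map fst ps1) (bvec t) u = chain (map fst ps2) (bvec t) u.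
Proof.
move=> h1 h2 hc u; rewrite -setw_w0 !chain_real // !evalL_coef.
apply: eq_big_seq => w' hw'; congr (_ * _); apply: lpeqP; first exact: qnz.
by move/allP: hc => /(_ w' hw').
Qed.


Ltac fin_real := rewrite /evalL ?big_cons ?big_nil /sgn ?(interp_eps (qnz m)) ?interp_sgn
   ?(interp_eig (qpar m) (two_nz m)) /= ?addr0.

Lemma realT0 : realizes (T_b j.-1) (Tloc Dt 0).
Proof.
move=> w u; rewrite /T_b /Tloc /= entw0 entw1 tswap0 !ltD_real !eqvD_real !pD_real.
by case: (rr w.1.1 < rr w.1.2)%N; [|case: (rr w.1.1 == rr w.1.2)]; fin_real.
Qed.
Lemma realT1 : realizes (T_b j) (Tloc Dt 1).
Proof.
move=> w u; rewrite /T_b /Tloc /= entw1 entw2 tswap1 !ltD_real !eqvD_real !pD_real.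
by case: (rr w.1.2 < rr w.2)%N; [|case: (rr w.1.2 == rr w.2)]; fin_real.
Qed.
Lemma reals0 : realizes (s_b j.-1) (sloc Dt 0).
Proof.
move=> w u; rewrite /s_b /sloc /= entw0 entw1 tswap0 !eqvD_real !pD_real.
by case: (rr w.1.1 == rr w.1.2); fin_real.
Qed.
Lemma reals1 : realizes (s_b j) (sloc Dt 1).
Proof.
move=> w u; rewrite /s_b /sloc /= entw1 entw2 tswap1 !eqvD_real !pD_real.
by case: (rr w.1.2 == rr w.2); fin_real.
Qed.
Lemma realS0 : realizes (S_b j.-1) (Sloc Dt 0).
Proof.
move=> w u; rewrite /S_b /Sloc entw0 entw1 -[fstAt 0 w]/(w.1.1) -[sndAt 0 w]/(w.1.2) ceD_real.
by case: ifP => _; [apply: realT0 | apply: reals0].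
Qed.
Lemma realS1 : realizes (S_b j) (Sloc Dt 1).
Proof.
move=> w u; rewrite /S_b /Sloc entw1 entw2 -[fstAt 1 w]/(w.1.2) -[sndAt 1 w]/(w.2) ceD_real.
by case: ifP => _; [apply: realT1 | apply: reals1].
Qed.
Lemma realSi0 : realizes (Sinv_b j.-1) (Siloc Dt 0).
Proof.
move=> w u; rewrite /Sinv_b /Siloc entw0 entw1 -[fstAt 0 w]/(w.1.1) -[sndAt 0 w]/(w.1.2) ceD_real.
case: ifP => _; last by apply: reals0.
rewrite realT0 /evalL big_cons interp_neg (interp_eps (qnz m)) /=; ring.
Qed.

Lemma valid_Dt : valid Dt.
Proof.
apply/allP => a _; apply/allP => b _; apply/allP => c _.
rewrite /conds !ltD_real !eqvD_real !ceD_real !pD_real.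
by apply: (@conds_nat (Defs.col k l) (par k l) (Ndim k l) colmono); apply: ltn_ord.
Qed.

Lemma local_all :
  [/\ forall u, chain [:: S_b j; S_b j.-1; T_b j] (bvec t) u
                = chain [:: T_b j.-1; S_b j; S_b j.-1] (bvec t) u,
      forall u, chain [:: S_b j; S_b j.-1; S_b j; Sinv_b j.-1; T_b j.-1] (bvec t) u
                = chain [:: T_b j; S_b j; S_b j.-1; S_b j; Sinv_b j.-1] (bvec t) u,
      forall u, chain [:: S_b j; S_b j.-1; S_b j; S_b j.-1; T_b j.-1] (bvec t) u
                = chain [:: T_b j; S_b j; S_b j.-1; S_b j; S_b j.-1] (bvec t) u,
      forall u, chain [:: S_b j.-1; Sinv_b j.-1] (bvec t) u = chain [::] (bvec t) u &
      forall u, chain [:: Sinv_b j.-1; S_b j.-1] (bvec t) u = chain [::] (bvec t) u].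
Proof.
have := checkAllP valid_Dt; rewrite /checkAll => /and5P[c1 c2 c3 c4 c5].
split.
- exact: (chain_local (ps1 := [:: (S_b j, Sloc Dt 1); (S_b j.-1, Sloc Dt 0); (T_b j, Tloc Dt 1)])
     (ps2 := [:: (T_b j.-1, Tloc Dt 0); (S_b j, Sloc Dt 1); (S_b j.-1, Sloc Dt 0)])
     (conj realS1 (conj realS0 (conj realT1 I))) (conj realT0 (conj realS1 (conj realS0 I))) c1).
- exact: (chain_local (ps1 := [:: (S_b j, Sloc Dt 1); (S_b j.-1, Sloc Dt 0); (S_b j, Sloc Dt 1);
                                  (Sinv_b j.-1, Siloc Dt 0); (T_b j.-1, Tloc Dt 0)])
     (ps2 := [:: (T_b j, Tloc Dt 1); (S_b j, Sloc Dt 1); (S_b j.-1, Sloc Dt 0); (S_b j, Sloc Dt 1);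
                 (Sinv_b j.-1, Siloc Dt 0)])
     (conj realS1 (conj realS0 (conj realS1 (conj realSi0 (conj realT0 I)))))
     (conj realT1 (conj realS1 (conj realS0 (conj realS1 (conj realSi0 I))))) c2).
- exact: (chain_local (ps1 := [:: (S_b j, Sloc Dt 1); (S_b j.-1, Sloc Dt 0); (S_b j, Sloc Dt 1);
                                  (S_b j.-1, Sloc Dt 0); (T_b j.-1, Tloc Dt 0)])
     (ps2 := [:: (T_b j, Tloc Dt 1); (S_b j, Sloc Dt 1); (S_b j.-1, Sloc Dt 0); (S_b j, Sloc Dt 1);
                 (S_b j.-1, Sloc Dt 0)])
     (conj realS1 (conj realS0 (conj realS1 (conj realS0 (conj realT0 I)))))
     (conj realT1 (conj realS1 (conj realS0 (conj realS1 (conj realS0 I))))) c3).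
- exact: (chain_local (ps1 := [:: (S_b j.-1, Sloc Dt 0); (Sinv_b j.-1, Siloc Dt 0)]) (ps2 := [::])
     (conj realS0 (conj realSi0 I)) I c4).
- exact: (chain_local (ps1 := [:: (Sinv_b j.-1, Siloc Dt 0); (S_b j.-1, Sloc Dt 0)]) (ps2 := [::])
     (conj realSi0 (conj realS0 I)) I c5).
Qed.

End Local.
End Ops2.

Theorem mainTheorem3 (m : nat) (k l : 'I_m -> nat) (n : nat) :
  (3 <= n)%N -> (1 <= m)%N -> (0 < Ndim k l)%N ->
  forall j : nat, (2 <= j <= n.-1)%N ->
  let S := @Sop m k l n in let T := @Top m k l n in
  [/\ S j \o S j.-1 \o T j = T j.-1 \o S j \o S j.-1,
      (exists Sinv : op k l n, cancel (S j.-1) Sinv /\ cancel Sinv (S j.-1)),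
      (forall Sinv : op k l n, cancel (S j.-1) Sinv -> cancel Sinv (S j.-1) ->
         S j \o S j.-1 \o S j \o Sinv \o T j.-1
         = T j \o S j \o S j.-1 \o S j \o Sinv)
    & S j \o S j.-1 \o S j \o S j.-1 \o T j.-1
      = T j \o S j \o S j.-1 \o S j \o S j.-1].
Proof.
move=> hn _ _ j /andP[hj2 hjn] S T.
have h2 : (j < n)%N by lia.
have h1 : (j.-1 < n)%N by lia.
have h0 : (j.-1.-1 < n)%N by lia.
have hj : (1 < j)%N by lia.
have L := @local_all m k l n j (Ordinal h0) (Ordinal h1) (Ordinal h2) erefl erefl erefl hj.
have E4 : forall v, S j.-1 (ext (Sinv_b j.-1) v) = v.
  move=> v; change (chain [:: S_b j.-1; Sinv_b j.-1] v = chain [::] v).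
  by apply: chain_eq => t u; case: (L t).
have E5 : forall v, ext (Sinv_b j.-1) (S j.-1 v) = v.
  move=> v; change (chain [:: Sinv_b j.-1; S_b j.-1] v = chain [::] v).
  by apply: chain_eq => t u; case: (L t).
split.
- apply: functional_extensionality => v.
  change (chain [:: S_b j; S_b j.-1; T_b j] v = chain [:: T_b j.-1; S_b j; S_b j.-1] v).
  by apply: chain_eq => t u; case: (L t).
- by exists (ext (Sinv_b j.-1)); split => v; [apply: E5 | apply: E4].
- move=> Sinv c1 c2.
  have eSi : forall v, Sinv v = ext (Sinv_b j.-1) v.
    by move=> v; rewrite -{1}(E4 v) c1.
  apply: functional_extensionality => v.
  change (S j (S j.-1 (S j (Sinv (T j.-1 v)))) = T j (S j (S j.-1 (S j (Sinv v))))).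
  rewrite !eSi.
  change (chain [:: S_b j; S_b j.-1; S_b j; Sinv_b j.-1; T_b j.-1] v
          = chain [:: T_b j; S_b j; S_b j.-1; S_b j; Sinv_b j.-1] v).
  by apply: chain_eq => t u; case: (L t).
- apply: functional_extensionality => v.
  change (chain [:: S_b j; S_b j.-1; S_b j; S_b j.-1; T_b j.-1] v
          = chain [:: T_b j; S_b j; S_b j.-1; S_b j; S_b j.-1] v).
  by apply: chain_eq => t u; case: (L t).
Qed.
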